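(* Let $p$ be a prime and $n\ge1$. Let $D_n=\prod_{1\le h\le k\le n,\ \gcd(h,k)=1} k$ be the product of the denominators of all nonzero Farey fractions of order $n$ (each written in lowest terms). Then $$\mathrm{ord}_p(D_n)=\sum_{b=1}^{\lfloor\log_p n\rfloor}\ \sum_{a=1}^{\lfloor n/p^b\rfloor}\varphi(ap^b).$$
   Context: $\mathrm{ord}_p(m)$ is the exponent of the prime $p$ in the factorization of the positive integer $m$; $\varphi$ is Euler's totient function. *)

(* Defs.v *)
From mathcomp Require Import all_boot.

Definition farey_denom_prod (n : nat) : nat :=
  \prod_(1 <= k < n.+1) \prod_(1 <= h < k.+1 | coprime h k) k.

(* Main.v *)
Require Import Defs.
From mathcomp Require Import all_boot zify.

Lemma sum_ext0 (F : nat -> nat) m M : m <= M ->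
  (forall b, m <= b < M -> F b = 0) ->
  \sum_(1 <= b < M) F b = \sum_(1 <= b < m) F b.
Proof.
case: m => [|m'] hmM hz.
  rewrite [RHS]big_geq // big_nat big1 // => b /andP[_ hb]; apply: hz; rewrite /= hb.
  by [].
rewrite (big_cat_nat _ (n:=m'.+1)) //= -[RHS]addn0; congr (_ + _).
by rewrite big_nat big1 // => b hb; apply: hz.
Qed.

Lemma logn_bound p k m : prime p -> 0 < k -> k < p ^ m ->
  logn p k = \sum_(1 <= b < m) (p ^ b %| k).
Proof.
move=> hp hk hkm; rewrite logn_count_dvd //.
have hp1 := prime_gt1 hp.
have z1 : forall b, m <= b -> (p ^ b %| k) = false.
  move=> b hb; apply/negbTE/negP => /(dvdn_leq hk) h.
  have := leq_trans hkm (leq_trans (leq_pexp2l (ltnW hp1) hb) h).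
  by rewrite ltnn.
have z2 : forall b, k <= b -> (p ^ b %| k) = false.
  move=> b hb; apply/negbTE/negP => /(dvdn_leq hk) h.
  have := leq_trans (leq_ltn_trans hb (ltn_expl b hp1)) h.
  by rewrite ltnn.
rewrite -(sum_ext0 (fun b => p ^ b %| k) k (maxn m k)) ?leq_maxr //; last first.
  by move=> b /andP[hb _]; rewrite z2.
rewrite (sum_ext0 (fun b => p ^ b %| k) m (maxn m k)) ?leq_maxl //.
by move=> b /andP[hb _]; rewrite z1.
Qed.

Lemma logn_prod p (r : seq nat) (P : pred nat) (F : nat -> nat) :
  (forall i, P i -> 0 < F i) ->
  logn p (\prod_(i <- r | P i) F i) = \sum_(i <- r | P i) logn p (F i).
Proof.
move=> hF; elim: r => [|x r IH]; first by rewrite !big_nil logn1.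
rewrite !big_cons; case: ifP => // hx.
rewrite lognM ?IH // ?hF //.
exact: prodn_cond_gt0.
Qed.

Lemma count_coprime k : 0 < k ->
  \sum_(1 <= h < k.+1 | coprime h k) 1 = totient k.
Proof.
move=> hk; rewrite totient_count_coprime.
under [in RHS]eq_bigr do rewrite coprime_sym.
rewrite big_mkcond /=.
have e : \sum_(0 <= i < k.+1) (coprime i k : nat) =
   (coprime 0 k : nat) + \sum_(1 <= i < k.+1) (if coprime i k then 1 else 0).
  rewrite big_ltn //; congr (_ + _); apply: eq_bigr => i _; by case: (coprime i k).
have e2 : \sum_(0 <= i < k.+1) (coprime i k : nat) =
   \sum_(0 <= i < k) (coprime i k : nat) + (coprime k k : nat).
  by rewrite big_nat_recr.
rewrite /coprime gcd0n gcdnn in e e2.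
rewrite /coprime; move: e e2; case: (k == 1) => /=; lia.
Qed.

Lemma sum_mult (f : nat -> nat) d n : 0 < d ->
  \sum_(1 <= k < n.+1 | d %| k) f k = \sum_(1 <= a < (n %/ d).+1) f (a * d).
Proof.
move=> hd; elim: n => [|n IH]; first by rewrite div0n !big_geq.
rewrite big_mkcond big_nat_recr //= -big_mkcond IH divnS //.
case: ifP => h /=.
  rewrite add1n [RHS]big_nat_recr //=; congr (_ + f _).
  by rewrite -(divnK h) divnS // h.
by rewrite addn0 add0n.
Qed.

Theorem lemma4p2 (p n : nat) (hp : prime p) (hn : 1 <= n) :
  logn p (farey_denom_prod n) =
  \sum_(1 <= b < (trunc_log p n).+1) \sum_(1 <= a < (n %/ p ^ b).+1) totient (a * p ^ b).
Proof.
have hp1 := prime_gt1 hp.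
rewrite /farey_denom_prod big_nat_cond logn_prod -?big_nat_cond; last first.
  move=> k /andP[/andP[hk _] _]; exact: prodn_cond_gt0.
set L := trunc_log p n.
have step : \sum_(1 <= k < n.+1) logn p (\prod_(1 <= h < k.+1 | coprime h k) k)
   = \sum_(1 <= k < n.+1) \sum_(1 <= b < L.+1) (if p ^ b %| k then totient k else 0).
  apply: eq_big_nat => k /andP[hk1 hkn].
  rewrite logn_prod //.
  have -> : \sum_(1 <= i < k.+1 | coprime i k) logn p k =
     (\sum_(1 <= i < k.+1 | coprime i k) 1) * logn p k.
    by rewrite big_distrl /=; apply: eq_bigr => i _; rewrite mul1n.
  rewrite (count_coprime k hk1) (logn_bound p k L.+1 hp hk1); last first.
    exact: leq_ltn_trans (trunc_log_ltn n hp1).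
  rewrite big_distrr /=; apply: eq_bigr => b _; by case: (p ^ b %| k); rewrite ?muln1 ?muln0.
rewrite step exchange_big_nat /=; apply: eq_bigr => b _.
rewrite -big_mkcond /= sum_mult // expn_gt0 (ltnW hp1).
by [].
Qed.
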